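(* Let $n\ge 2$ and let $H$ be a graph with vertex set $[n]$. If $H$ is Henneberg, then there exists a pair of rooted binary trees $T_1,T_2$ on leaf set $[n]$ such that the restricted clade graph $G^H_{T_1,T_2}$ is a tree.
   Context: A graph is Henneberg if it is the complete graph $K_2$, or it can be obtained from a smaller Henneberg graph by one of the Henneberg moves: (i) adding a new vertex adjacent to two existing vertices; (ii) removing an existing edge $ij$ and adding a new vertex adjacent to $i$, $j$ and one other existing vertex (graphs are considered up to relabeling of vertices). A rooted binary tree on leaf set $[n]$ has leaves labeled bijectively by $[n]$ and each internal vertex has exactly two children. A clade is the set of leaves below an internal vertex; $\mathrm{clade}(T)$ is the set of clades (including $[n]$); $c_T(S)$ is the smallest clade of $T$ containing $S\subseteq[n]$. The restricted clade graph $G^H_{T_1,T_2}$ is the bipartite multigraph with vertex set the disjoint union of $\mathrm{clade}(T_1)$ and $\mathrm{clade}(T_2)$, having for each edge $ij$ of $H$ an edge $e_{ij}$ joining $c_{T_1}(\{i,j\})$ to $c_{T_2}(\{i,j\})$. *)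

(* Defs.v *)
From mathcomp Require Import all_boot fingroup perm.
Set Implicit Arguments. Unset Strict Implicit. Unset Printing Implicit Defensive.

(* A graph on vertex set [n] = 'I_n is given by its edge set, a set of
   2-element subsets of 'I_n. *)

(* embedding of the old vertices into 'I_n.+1; the new vertex is ord_max *)
Definition emb n (i : 'I_n) : 'I_n.+1 := widen_ord (leqnSn n) i.

Definition lift_edges n (E : {set {set 'I_n}}) : {set {set 'I_n.+1}} :=
  [set [set emb x | x in (e : {set 'I_n})] | e in E].

Inductive henneberg : forall n : nat, {set {set 'I_n}} -> Prop :=
| henK2 : henneberg [set [set (ord0 : 'I_2); ord_max]]
| henRelabel n (E : {set {set 'I_n}}) (s : {perm 'I_n}) :
    henneberg E -> henneberg [set [set s x | x in (e : {set 'I_n})] | e in E]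
| henMove1 n (E : {set {set 'I_n}}) (i j : 'I_n) :
    henneberg E -> i != j ->
    henneberg (lift_edges E :|: [set [set ord_max; emb i]; [set ord_max; emb j]])
| henMove2 n (E : {set {set 'I_n}}) (i j k : 'I_n) :
    henneberg E -> [set i; j] \in E -> k != i -> k != j ->
    henneberg (lift_edges (E :\ [set i; j]) :|:
               [set [set ord_max; emb i]; [set ord_max; emb j]; [set ord_max; emb k]]).

Inductive btree (n : nat) : Type :=
| BLeaf of 'I_n
| BNode of btree n & btree n.

Fixpoint leaves n (t : btree n) : seq 'I_n :=
  match t with
  | BLeaf i => [:: i]
  | BNode l r => leaves l ++ leaves r
  end.

Definition on_leafset n (t : btree n) : Prop := perm_eq (leaves t) (enum 'I_n).

Fixpoint clades n (t : btree n) : {set {set 'I_n}} :=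
  match t with
  | BLeaf _ => set0
  | BNode l r => [set [set x in leaves t]] :|: clades l :|: clades r
  end.

(* smallest clade of t containing S (setT is an unused default) *)
Definition cT n (t : btree n) (S : {set 'I_n}) : {set 'I_n} :=
  odflt setT [pick C in clades t |
     (S \subset C) && [forall D in clades t, (S \subset D) ==> (C \subset D)]].

Section Multigraph.
Variables (V Ed : finType) (Vs : {set V}) (Es : {set Ed}) (ends : Ed -> V * V).

Definition joins (e : Ed) (u v : V) : bool :=
  (ends e == (u, v)) || (ends e == (v, u)).

Definition adj : rel V := fun u v => [exists e in Es, joins e u v].

Definition mg_connected : Prop :=
  forall u v, u \in Vs -> v \in Vs -> connect adj u v.

(* a cycle: distinct vertices v_0..v_{k-1}, distinct edges e_0..e_{k-1},
   k >= 1, e_i joining v_i and v_{i+1 mod k} (parallel edges form a cycle) *)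
Definition mg_cycle (es : seq Ed) (vs : seq V) : Prop :=
  [/\ [&& 0 < size es, size es == size vs, uniq es & uniq vs],
      all (mem Es) es, all (mem Vs) vs &
      forall (i : nat) (e0 : Ed) (v0 : V), i < size es ->
        joins (nth e0 es i) (nth v0 vs i) (nth v0 vs (i.+1 %% size vs))].

Definition mg_acyclic : Prop := forall es vs, ~ mg_cycle es vs.

Definition mg_tree : Prop := [/\ Vs != set0, mg_connected & mg_acyclic].
End Multigraph.

(* the restricted clade graph G^H_{T1,T2}: vertices clade(T1) ⊔ clade(T2),
   one edge e_ij for each edge {i,j} of H *)
Definition clade_vertices n (t1 t2 : btree n) : {set {set 'I_n} + {set 'I_n}} :=
  [set inl C | C in clades t1] :|: [set inr C | C in clades t2].

Definition clade_ends n (t1 t2 : btree n) (e : {set 'I_n}) :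
  ({set 'I_n} + {set 'I_n}) * ({set 'I_n} + {set 'I_n}) :=
  (inl (cT t1 e), inr (cT t2 e)).

Definition restricted_clade_graph_is_tree n (H : {set {set 'I_n}}) (t1 t2 : btree n) : Prop :=
  mg_tree (clade_vertices t1 t2) H (clade_ends t1 t2).

(* Main.v *)
Require Import Defs.
From mathcomp Require Import all_boot.
From mathcomp Require Import fingroup perm.
Set Implicit Arguments. Unset Strict Implicit. Unset Printing Implicit Defensive.

Section Graph.
Variables (V E : finType) (ends : E -> V * V).
Implicit Types (Vs : {set V}) (Es : {set E}).

Definition wf Vs Es := forall g, g \in Es -> ((ends g).1 \in Vs) && ((ends g).2 \in Vs).
Definition TW Vs Es := mg_tree Vs Es ends /\ wf Vs Es.

Lemma adjP Es u w : reflect (exists2 g, g \in Es & joins ends g u w) (adj Es ends u w).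
Proof.
rewrite /adj; apply: (iffP existsP) => [[g /andP[? ?]]|[g ? ?]]; exists g => //.
by apply/andP.
Qed.

Lemma joins_sym g u w : joins ends g u w = joins ends g w u.
Proof. by rewrite /joins orbC. Qed.

Lemma adj_sym Es : symmetric (adj Es ends).
Proof. by move=> u w; apply: eq_existsb => g; rewrite joins_sym. Qed.

Lemma conn_sym Es u w : connect (adj Es ends) u w = connect (adj Es ends) w u.
Proof. exact: (sym_connect_sym (adj_sym Es)). Qed.

Lemma adj_sub Es Es' u w : Es \subset Es' -> adj Es ends u w -> adj Es' ends u w.
Proof.
move=> sub /adjP[g gE J]; apply/adjP; exists g => //.
by rewrite (subsetP sub).
Qed.

Lemma conn_sub Es Es' u w : Es \subset Es' ->
  connect (adj Es ends) u w -> connect (adj Es' ends) u w.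
Proof.
move=> sub; apply: connect_sub => x y H; apply: connect1; exact: adj_sub H.
Qed.

Lemma joins2 g u1 w1 u2 w2 : joins ends g u1 w1 -> joins ends g u2 w2 ->
  (u1 = u2 /\ w1 = w2) \/ (u1 = w2 /\ w1 = u2).
Proof.
rewrite /joins; case: (ends g) => g1 g2.
by case/orP => /eqP[E1 E2] /orP[] /eqP[E3 E4]; subst; auto.
Qed.

Lemma joins_in Vs Es g u w : wf Vs Es -> g \in Es -> joins ends g u w ->
  (u \in Vs) && (w \in Vs).
Proof.
move=> W gE; move: (W g gE); rewrite /joins; case: (ends g) => g1 g2 /=.
by case/andP=> H1 H2 /orP[] /eqP[E1 E2]; subst; rewrite ?H1 ?H2.
Qed.

Lemma adj_in Vs Es u w : wf Vs Es -> adj Es ends u w -> (u \in Vs) && (w \in Vs).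
Proof. by move=> W /adjP[g gE J]; exact: joins_in W gE J. Qed.

Lemma T0 u : TW [set u] set0.
Proof.
split; [split|].
- by apply/set0Pn; exists u; rewrite set11.
- by move=> a b; rewrite !inE => /eqP-> /eqP->; exact: connect0.
- move=> es vs [/and4P [Hs _ _ _] Hall _ _].
  by case: es Hs Hall => //= g es _ /andP[]; rewrite inE.
- by rewrite /wf => g; rewrite in_set0.
Qed.

Definition prv k m := if m is m0.+1 then m0 else k.-1.

Lemma prv_lt k m : m < k -> prv k m < k.
Proof. by case: m => [|m] /= H; [rewrite prednK // ltnW| rewrite ltnW]. Qed.

Lemma prv_next k m : m < k -> (prv k m).+1 %% k = m.
Proof.
case: m => [|m] /= H; first by rewrite prednK // modnn.
by rewrite modn_small.
Qed.

Lemma prv_neq k m : 1 < k -> m < k -> prv k m != m.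
Proof. by case: m => [|m] /= H1 H2; [rewrite -lt0n -ltnS prednK // ltnW | rewrite neq_ltn ltnSn]. Qed.

(* a uniq path gives a cycle together with a closing edge *)
Lemma path_cycle Vs Es g a p : TW Vs Es -> g \in Es ->
  path (adj (Es :\ g) ends) a p -> uniq (a :: p) -> joins ends g a (last a p) -> False.
Proof.
move=> [[_ _ Hac] W] gE Hp Hu Hg.
set vs := a :: p.
pose pe u w := odflt g [pick h in Es :\ g | joins ends h u w].
have peP : forall i, i < size p -> (pe (nth a vs i) (nth a vs i.+1) \in Es :\ g) &&
     joins ends (pe (nth a vs i) (nth a vs i.+1)) (nth a vs i) (nth a vs i.+1).
  move=> i Hi; move/pathP: Hp => /(_ a i Hi) /adjP [h hE hJ].
  rewrite /pe; case: pickP => [h' /andP[-> ->] //|/(_ h)].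
  by rewrite hE hJ.
set es := rcons [seq pe (nth a vs i) (nth a vs i.+1) | i <- iota 0 (size p)] g.
have Hsz : size es = size vs by rewrite size_rcons size_map size_iota.
have HaV : a \in Vs by case/andP: (joins_in W gE Hg).
apply: (Hac es vs); split.
- apply/and4P; split; [by rewrite /es size_rcons| by rewrite Hsz | | by []].
  rewrite /es rcons_uniq; apply/andP; split.
    apply/mapP => -[i]; rewrite mem_iota add0n => /andP[_ Hi] Eq.
    by move: (peP i Hi); rewrite -Eq !inE eqxx.
  rewrite (map_inj_in_uniq (s := iota 0 (size p))) ?iota_uniq // => i j.
  rewrite !mem_iota !add0n => /andP[_ Hi] /andP[_ Hj] Eq.
  case/andP: (peP i Hi) => _ Ji; case/andP: (peP j Hj) => _; rewrite -Eq => Jj.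
  have nu k1 k2 : k1 < size vs -> k2 < size vs -> nth a vs k1 = nth a vs k2 -> k1 = k2.
    by move=> H1 H2 /eqP; rewrite nth_uniq // => /eqP.
  have Hs : size vs = (size p).+1 by [].
  case: (joins2 Ji Jj) => [[/nu E1 _]|[/nu E1 /nu E2]].
  + by apply: E1; rewrite Hs ltnS ltnW.
  + have := E1; have := E2; rewrite Hs !ltnS => e2 e1.
    have {}e1 := e1 (ltnW Hi) Hj; have {}e2 := e2 Hi (ltnW Hj).
    by move: e1 e2 => -> /eqP; rewrite -addn2 -{2}(addn0 j) eqn_add2l.
- apply/allP => h; rewrite mem_rcons inE => /orP[/eqP->//|/mapP[i]].
  rewrite mem_iota add0n => /andP[_ Hi] ->.
  by case/andP: (peP i Hi); rewrite !inE => /andP[_ H] _.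
- apply/(all_nthP a) => i Hi.
  case: i Hi => [|i] Hi //=.
  move/pathP: Hp => /(_ a i Hi) H.
  by case/andP: (adj_in (Es := Es :\ g) (Vs := Vs) (fun h hE => W h (subsetP (subD1set Es g) h hE)) H).
- move=> i e0 v0; rewrite Hsz => Hi.
  rewrite nth_rcons size_map size_iota.
  have Hs : size vs = (size p).+1 by [].
  have Hd j : j < size vs -> nth v0 vs j = nth a vs j by move=> Hj; apply: set_nth_default.
  case: (ltnP i (size p)) => Hip.
  { have Hm : i.+1 %% size vs = i.+1 by rewrite modn_small // Hs ltnS.
    rewrite Hm (nth_map 0) ?size_iota // nth_iota // add0n.
    rewrite (Hd i) ?Hs ?(ltnW Hip) // (Hd i.+1) ?Hs ?ltnS //.
    by case/andP: (peP i Hip). }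
  have Ei : i = size p by apply/eqP; rewrite eqn_leq Hip andbT -ltnS -Hs.
  rewrite Ei eqxx Hs modnn /= joins_sym.
  by rewrite Hd ?Hs // -[size p]/((size (a :: p)).-1) nth_last.
Qed.

Lemma sep Vs Es g a b : TW Vs Es -> g \in Es -> joins ends g a b ->
  ~~ connect (adj (Es :\ g) ends) a b.
Proof.
move=> T gE J; apply/negP => /connectP [p Hp Eb].
case: (shortenP Hp) Eb => p' Hp' Hu _ Eb.
apply: (path_cycle T gE Hp' Hu); by rewrite -Eb.
Qed.

Lemma dich Vs Es g a b u : TW Vs Es -> g \in Es -> joins ends g a b -> u \in Vs ->
  connect (adj (Es :\ g) ends) u a || connect (adj (Es :\ g) ends) u b.
Proof.
move=> T gE J uV.
have [[_ Hc _] W] := T.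
have aV : a \in Vs by case/andP: (joins_in W gE J).
move/connectP: (Hc a u aV uV) => [p Hp ->].
suff step : forall q x, path (adj Es ends) x q ->
  connect (adj (Es :\ g) ends) x a || connect (adj (Es :\ g) ends) x b ->
  connect (adj (Es :\ g) ends) (last x q) a || connect (adj (Es :\ g) ends) (last x q) b.
  by apply: step Hp _; rewrite connect0.
elim=> [|y q IH] x //= /andP[Hxy Hq] Cx.
apply: IH => //.
case/adjP: Hxy => h hE hJ.
case: (eqVneq h g) => [Ehg|Nhg].
  subst h; case: (joins2 hJ J) => [[_ ->]|[_ ->]]; by rewrite connect0 ?orbT.
have Hyx : connect (adj (Es :\ g) ends) y x.
  apply: connect1; apply/adjP; exists h; [by rewrite !inE Nhg hE | by rewrite joins_sym].
by case/orP: Cx => H; rewrite (connect_trans Hyx H) ?orbT.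
Qed.

Lemma nth_mod_small k i : i.+1 < k -> i.+1 %% k = i.+1.
Proof. exact: modn_small. Qed.

Lemma T1 Vs Es z f y : TW Vs Es -> z \notin Vs -> f \notin Es -> y \in Vs ->
  joins ends f z y -> TW (z |: Vs) (f |: Es).
Proof.
move=> [[_ Hc Hac] W] zV fE yV Jf.
have W' : wf (z |: Vs) (f |: Es).
  move=> g; rewrite !inE => /orP[/eqP->|gE].
    move: Jf; rewrite /joins; case: (ends f) => f1 f2.
    by case/orP => /eqP[-> ->] /=; rewrite eqxx yV ?orbT.
  by case/andP: (W g gE) => -> ->; rewrite !orbT.
have Hsub : Es \subset f |: Es by apply/subsetP => h hE; rewrite !inE hE orbT.
split; [split|] => //.
- by apply/set0Pn; exists z; rewrite setU11.
- have toy u : u \in z |: Vs -> connect (adj (f |: Es) ends) u y.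
    rewrite !inE => /orP[/eqP->|uV].
      by apply: connect1; apply/adjP; exists f; rewrite ?setU11.
    exact: conn_sub Hsub (Hc u y uV yV).
  move=> u w Hu Hw; apply: connect_trans (toy u Hu) _.
  by rewrite conn_sym; apply: toy.
- move=> es vs [/and4P [Hs0 /eqP Hs Hue Huv] Hes Hvs Hj].
  have inc_f i : i < size es -> nth f es i \in Es ->
      (nth z vs i != z) && (nth z vs (i.+1 %% size vs) != z).
    move=> Hi hE; case/andP: (joins_in W hE (Hj i f z Hi)) => H1 H2.
    by apply/andP; split; apply/eqP => Eq; rewrite -Eq ?H1 ?H2 in zV.
  have esin i : i < size es -> nth f es i \in f |: Es by move=> Hi; apply: (allP Hes); rewrite mem_nth.
  case: (boolP (z \in vs)) => zvs.
  + set m := index z vs.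
    have Hm : m < size vs by rewrite index_mem.
    have Ezm : nth z vs m = z by rewrite nth_index.
    have fm : forall i, i < size es -> (nth z vs i = z \/ nth z vs (i.+1 %% size vs) = z) -> nth f es i = f.
      move=> i Hi Hz; move: (esin i Hi); rewrite !inE => /orP[/eqP//|hE].
      by case/andP: (inc_f i Hi hE); case: Hz => ->; rewrite eqxx.
    have Hme : m < size es by rewrite Hs.
    case: (ltnP 1 (size vs)) => Hk.
      have Hp' : prv (size vs) m < size es by rewrite Hs prv_lt.
      have E1 := fm m Hme (or_introl Ezm).
      have E2 := fm _ Hp' (or_intror (etrans (congr1 (nth z vs) (prv_next Hm)) Ezm)).
      move: (prv_neq Hk Hm); rewrite -(nth_uniq f Hp' Hme Hue).
      by rewrite E1 E2 eqxx.
    have Hk1 : size vs = 1.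
      by apply/eqP; rewrite eqn_leq Hk /=; exact: leq_ltn_trans (leq0n m) Hm.
    have Hm0 : m = 0 by apply/eqP; move: Hm; rewrite Hk1 ltnS leqn0.
    have E0 : nth z vs 0 = z by move: Ezm; rewrite Hm0.
    have := Hj m f z Hme; rewrite (fm m Hme (or_introl Ezm)) Hk1 modn1 E0 Ezm => Jzz.
    case: (joins2 Jzz Jf) => [[_ Eq]|[Eq _]]; by rewrite Eq yV in zV.
  + apply: (Hac es vs); split.
    * by rewrite Hs0 Hs eqxx Hue Huv.
    * apply/(all_nthP f) => i Hi; move: (esin i Hi); rewrite !inE => /orP[/eqP Eq|//].
      have := Hj i f z Hi; rewrite Eq => J'.
      exfalso; case: (joins2 J' Jf) => [[E1 _]|[_ E1]]; move/negP: zvs; apply; rewrite -{1}E1; apply: mem_nth.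
        by rewrite -Hs.
      by rewrite ltn_pmod // -Hs.
    * apply/allP => u uvs; move: (allP Hvs u uvs); rewrite !inE => /orP[/eqP Eq|//].
      by move: zvs; rewrite -Eq uvs.
    * exact: Hj.
Qed.

Lemma T2 Vs Es g a b f c d : TW Vs Es -> g \in Es -> joins ends g a b ->
  f \notin Es -> joins ends f c d -> c \in Vs -> d \in Vs ->
  connect (adj (Es :\ g) ends) c a -> connect (adj (Es :\ g) ends) d b ->
  TW Vs (f |: (Es :\ g)).
Proof.
move=> T gE Jg fE Jf cV dV Hca Hdb.
have [[Hne Hc Hac] W] := T.
set Em := Es :\ g.
have sub1 : Em \subset f |: Em by apply/subsetP => h hE; apply: setU1r.
have W' : wf Vs (f |: Em).
  move=> h; rewrite in_setU1 => /orP[/eqP->|hE].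
    move: Jf cV dV; rewrite /joins; case: (ends f) => f1 f2.
    by case/orP => /eqP[E1 E2]; subst f1 f2 => /= -> ->.
  by case/andP: (W h (subsetP (subD1set Es g) h hE)) => -> ->.
have sep_ab := sep T gE Jg.
have D u : u \in Vs -> connect (adj Em ends) u a || connect (adj Em ends) u b.
  exact: dich T gE Jg.
have Hab' : connect (adj (f |: Em) ends) b a.
  apply: (connect_trans (y:=d)); first by rewrite conn_sym; exact: conn_sub sub1 Hdb.
  apply: (connect_trans (y:=c)).
    by apply: connect1; apply/adjP; exists f; [rewrite setU11 | rewrite joins_sym].
  exact: conn_sub sub1 Hca.
have toa u : u \in Vs -> connect (adj (f |: Em) ends) u a.
  move/D => /orP[H|H]; first exact: conn_sub sub1 H.
  exact: connect_trans (conn_sub sub1 H) Hab'.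
split; [split|] => //.
- move=> u w uV wV; apply: connect_trans (toa u uV) _; rewrite conn_sym; exact: toa.
- move=> es vs [/and4P [Hs0 /eqP Hs Hue Huv] Hes Hvs Hj].
  case: (boolP (f \in es)) => fes.
  + set m := index f es.
    have Hm : m < size es by rewrite index_mem.
    have Efm : nth f es m = f by rewrite nth_index.
    have inEm i : i < size es -> i != m -> nth f es i \in Em.
      move=> Hi Nim; have H : nth f es i \in f |: Em := allP Hes _ (mem_nth f Hi).
      move: H; rewrite in_setU1 => /orP[/eqP Eq|//].
      by move: Nim; rewrite -(nth_uniq f Hi Hm Hue) Eq Efm eqxx.
    have adjm i : i < size es -> i != m ->
        adj Em ends (nth c vs i) (nth c vs (i.+1 %% size vs)).
      move=> Hi Nim; apply/adjP; exists (nth f es i); [exact: inEm| exact: Hj].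
    have chain lo hi : lo <= hi -> hi < size vs -> (forall i, lo <= i < hi -> i != m) ->
        connect (adj Em ends) (nth c vs lo) (nth c vs hi).
      elim: hi => [|hi IH].
        by rewrite leqn0 => /eqP-> _ _; exact: connect0.
      rewrite leq_eqVlt => /orP[/eqP->|Hlt] Hhi Hn; first exact: connect0.
      apply: connect_trans (IH _ (ltnW Hhi) _) _.
      + by rewrite -ltnS.
      + by move=> i /andP[H1 H2]; apply: Hn; rewrite H1 ltnW.
      apply: connect1; rewrite -(modn_small Hhi); apply: adjm.
        by rewrite Hs ltnW.
      by apply: Hn; rewrite leqnn andbT -ltnS.
    have Hmv : m < size vs by rewrite -Hs.
    have Ccd : connect (adj Em ends) (nth c vs (m.+1 %% size vs)) (nth c vs m).
      case: (ltnP m.+1 (size vs)) => Hmk.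
        rewrite modn_small //.
        have Hk0 : 0 < size vs by rewrite (leq_ltn_trans (leq0n m)).
        apply: (connect_trans (y := nth c vs (size vs).-1)).
          apply: chain; first by rewrite -ltnS prednK.
            by rewrite prednK.
          by move=> i /andP[H1 _]; rewrite neq_ltn H1 orbT.
        apply: (connect_trans (y := nth c vs 0)).
          apply: connect1.
          have := adjm (size vs).-1; rewrite prednK // modnn; apply.
            by rewrite Hs.
          have Hmp : m < (size vs).-1 by rewrite -ltnS prednK.
          by rewrite neq_ltn Hmp orbT.
        apply: chain => //; by move=> i /andP[_ H]; rewrite neq_ltn H.
      have Emk : m.+1 = size vs by apply/eqP; rewrite eqn_leq Hmk Hmv.
      rewrite Emk modnn; apply: chain => //; by move=> i /andP[_ H]; rewrite neq_ltn H.
    have := Hj m f c Hm; rewrite Efm => Jm.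
    have Ccd' : connect (adj Em ends) c d.
      case: (joins2 Jm Jf) => [[E1 E2]|[E1 E2]]; move: Ccd; rewrite E1 E2 //.
      by rewrite conn_sym.
    move/negP: sep_ab; apply.
    apply: (connect_trans (y := c)); first by rewrite conn_sym.
    exact: connect_trans Ccd' Hdb.
  + apply: (Hac es vs); split => //.
    * by rewrite Hs0 Hs eqxx Hue Huv.
    * apply/allP => h hes; have H : h \in f |: Em := allP Hes h hes.
      move: H; rewrite in_setU1 => /orP[/eqP Eq|].
        by move: fes; rewrite -Eq hes.
      by rewrite in_setD1 => /andP[_ H].
Qed.

End Graph.

Section Transport.
Variables (V E V' E' : finType) (ends : E -> V * V) (ends' : E' -> V' * V').
Variables (phi : V -> V') (psi : E -> E').

Lemma adj_map (Es : {set E}) (u w : V) :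
  (forall g, g \in Es -> ends' (psi g) = (phi (ends g).1, phi (ends g).2)) ->
  adj Es ends u w -> adj (psi @: Es) ends' (phi u) (phi w).
Proof.
move=> He /adjP[g gE J]; apply/adjP; exists (psi g); first exact: imset_f.
move: J; rewrite /joins He //; case: (ends g) => g1 g2 /=.
by case/orP => /eqP[E1 E2]; subst; rewrite eqxx ?orbT.
Qed.

Lemma joins_map g u w :
  ends' (psi g) = (phi (ends g).1, phi (ends g).2) ->
  joins ends g u w -> joins ends' (psi g) (phi u) (phi w).
Proof.
move=> He; rewrite /joins He; case: (ends g) => g1 g2 /=.
by case/orP => /eqP[E1 E2]; subst; rewrite eqxx ?orbT.
Qed.

Lemma conn_map (Es : {set E}) (u w : V) :
  (forall g, g \in Es -> ends' (psi g) = (phi (ends g).1, phi (ends g).2)) ->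
  connect (adj Es ends) u w -> connect (adj (psi @: Es) ends') (phi u) (phi w).
Proof.
move=> He /connectP[p Hp ->]; apply/connectP; exists (map phi p); last by rewrite last_map.
by apply: homo_path Hp => x y; apply: adj_map.
Qed.

Lemma pre_seq (A B : finType) (f : A -> B) (D : {set A}) s :
  all (mem (f @: D)) s -> exists2 s0, s = map f s0 & all (mem D) s0.
Proof.
elim: s => [|y s IH] /=; first by exists [::].
case/andP => /imsetP[x xD ->] /IH[s0 -> H]; exists (x :: s0) => //=.
by rewrite xD H.
Qed.

Lemma T3 (Vs : {set V}) (Es : {set E}) : injective phi -> injective psi ->
  (forall g, g \in Es -> ends' (psi g) = (phi (ends g).1, phi (ends g).2)) ->
  TW ends Vs Es -> TW ends' (phi @: Vs) (psi @: Es).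
Proof.
move=> Iphi Ipsi He [[Hne Hc Hac] W].
split; [split|].
- case/set0Pn: Hne => x xV; apply/set0Pn; exists (phi x); exact: imset_f.
- move=> u' w' /imsetP[u uV ->] /imsetP[w wV ->]; apply: conn_map => //; exact: Hc.
- move=> es' vs' [/and4P [Hs0 /eqP Hs Hue Huv] Hes Hvs Hj].
  case: (pre_seq Hes) => es Ees Hes0; case: (pre_seq Hvs) => vs Evs Hvs0.
  subst es' vs'.
  rewrite size_map in Hs0; rewrite !size_map in Hs.
  rewrite (map_inj_uniq Ipsi) in Hue; rewrite (map_inj_uniq Iphi) in Huv.
  apply: (Hac es vs); split => //.
    by rewrite Hs0 Hs eqxx Hue Huv.
  move=> i e0 v0 Hi.
  have Hi' : i < size vs by rewrite -Hs.
  have Hk : 0 < size vs by rewrite -Hs (leq_ltn_trans (leq0n i)).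
  have Hi2 : i.+1 %% size vs < size vs by rewrite ltn_pmod.
  have := Hj i (psi e0) (phi v0); rewrite !size_map => /(_ Hi).
  rewrite (nth_map e0) // (nth_map v0) // (nth_map v0) //.
  have gE : nth e0 es i \in Es by apply: (allP Hes0); rewrite mem_nth.
  rewrite /joins He //; case: (ends (nth e0 es i)) => g1 g2 /=.
  by rewrite !xpair_eqE !(inj_eq Iphi).
- move=> h' /imsetP[h hE ->]; rewrite He //=.
  by case/andP: (W h hE) => H1 H2; rewrite !imset_f.
Qed.

End Transport.

Section Trees.
Variable n : nat.
Implicit Types (t : btree n) (S C D : {set 'I_n}).

Definition ls t : {set 'I_n} := [set z in leaves t].
Definition isnode t := if t is BNode _ _ then true else false.

Lemma ls_node l r : ls (BNode l r) = ls l :|: ls r.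
Proof. by apply/setP => z; rewrite !inE /= mem_cat. Qed.

Lemma clades_node l r : clades (BNode l r) = [set ls (BNode l r)] :|: clades l :|: clades r.
Proof. by []. Qed.

Lemma leaves_ne t : exists z, z \in leaves t.
Proof. by elim: t => [y|l [z Hz] r _]; [exists y; rewrite inE | exists z; rewrite /= mem_cat Hz]. Qed.

Lemma uniq_cat_disj (T : eqType) (s1 s2 : seq T) z :
  uniq (s1 ++ s2) -> z \in s1 -> z \in s2 -> False.
Proof.
rewrite cat_uniq => /and3P[_ /hasPn H _] z1 z2.
by move: (H z z2); rewrite /= z1.
Qed.

Lemma uniq_catI (T : eqType) (s1 s2 : seq T) :
  uniq s1 -> uniq s2 -> (forall z, z \in s1 -> z \in s2 -> False) -> uniq (s1 ++ s2).
Proof.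
move=> u1 u2 H; rewrite cat_uniq u1 u2 andbT /=; apply/hasPn => z z2 /=.
by apply/negP => z1; apply: (H z).
Qed.

Lemma clade_sub t C : C \in clades t -> C \subset ls t.
Proof.
elim: t => [y|l IHl r IHr] //=; first by rewrite inE.
rewrite -/(ls (BNode l r)) ls_node !inE => /orP[/orP[/eqP->|/IHl H]|/IHr H].
- by rewrite -ls_node.
- by apply: subset_trans H _; apply: subsetUl.
- by apply: subset_trans H _; apply: subsetUr.
Qed.

Lemma clade_nonsingle t C x : uniq (leaves t) -> C \in clades t -> ~~ (C \subset [set x]).
Proof.
elim: t => [y|l IHl r IHr] //=; first by rewrite inE.
move=> U; have Ul : uniq (leaves l) by move: U; rewrite cat_uniq => /and3P[].
have Ur : uniq (leaves r) by move: U; rewrite cat_uniq => /and3P[].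
rewrite -/(ls (BNode l r)) !inE => /orP[/orP[/eqP->|/(IHl Ul) //]|/(IHr Ur) //].
apply/negP => /subsetP H.
case: (leaves_ne l) => z1 H1; case: (leaves_ne r) => z2 H2.
have E1 : z1 = x by apply/set1P; apply: H; rewrite ls_node !inE H1.
have E2 : z2 = x by apply/set1P; apply: H; rewrite ls_node !inE H2 orbT.
subst; exact: uniq_cat_disj U H1 H2.
Qed.

Lemma clade_node t D : D \in clades t -> isnode t.
Proof. by case: t => //= y; rewrite inE. Qed.

Definition minc t S C :=
  [/\ C \in clades t, S \subset C & forall D, D \in clades t -> S \subset D -> C \subset D].

Lemma cT_eq t S C : minc t S C -> cT t S = C.
Proof.
case=> C1 C2 C3; rewrite /cT; case: pickP => [C' /andP[H1 /andP[H2 /forallP H3]] | none] /=.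
  apply/eqP; rewrite eqEsubset C3 // andbT.
  by move: (H3 C) => /implyP /(_ C1) /implyP /(_ C2).
move: (none C); rewrite C1 C2 /=; move/negbT => /forallPn [D].
by rewrite negb_imply => /andP[D1]; rewrite negb_imply => /andP[D2]; rewrite C3.
Qed.

Lemma minc_ex t S : uniq (leaves t) -> S != set0 -> S \subset ls t -> isnode t ->
  exists C, minc t S C.
Proof.
elim: t => [y|l IHl r IHr] //= U S0 Ssub _.
have Ul : uniq (leaves l) by move: U; rewrite cat_uniq => /and3P[].
have Ur : uniq (leaves r) by move: U; rewrite cat_uniq => /and3P[].
case/set0Pn: S0 => s0 s0S.
have disj : S \subset ls l -> S \subset ls r -> False.
  move=> /subsetP Hl /subsetP Hr; apply: (uniq_cat_disj U (z := s0)).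
    by move: (Hl s0 s0S); rewrite inE.
  by move: (Hr s0 s0S); rewrite inE.
have root : ~~ ((S \subset ls l) && isnode l) -> ~~ ((S \subset ls r) && isnode r) ->
    exists C, minc (BNode l r) S C.
  move=> Nl Nr; exists (ls (BNode l r)); split => //.
    by rewrite clades_node !inE eqxx.
  move=> D; rewrite clades_node !inE => /orP[/orP[/eqP->//|Dl]|Dr] SD.
    by move: Nl; rewrite (clade_node Dl) andbT (subset_trans SD (clade_sub Dl)).
  by move: Nr; rewrite (clade_node Dr) andbT (subset_trans SD (clade_sub Dr)).
have S0 : S != set0 by apply/set0Pn; exists s0.
case: (boolP ((S \subset ls l) && isnode l)) => [/andP[Sl nl]|Nl].
  case: (IHl Ul S0 Sl nl) => C [C1 C2 C3]; exists C; split.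
  - by rewrite clades_node !inE C1 orbT.
  - exact: C2.
  move=> D; rewrite clades_node !inE => /orP[/orP[/eqP->|Dl]|Dr] SD.
  - by rewrite ls_node; apply: subset_trans (clade_sub C1) (subsetUl _ _).
  - exact: C3.
  - by case: disj => //; apply: subset_trans SD (clade_sub Dr).
case: (boolP ((S \subset ls r) && isnode r)) => [/andP[Sr nr]|Nr]; last exact: root.
case: (IHr Ur S0 Sr nr) => C [C1 C2 C3]; exists C; split.
- by rewrite clades_node !inE C1 orbT.
- exact: C2.
move=> D; rewrite clades_node !inE => /orP[/orP[/eqP->|Dl]|Dr] SD.
- by rewrite ls_node; apply: subset_trans (clade_sub C1) (subsetUr _ _).
- by case: disj => //; apply: subset_trans SD (clade_sub Dl).
- exact: C3.
Qed.

Lemma cT_spec t S : uniq (leaves t) -> S != set0 -> S \subset ls t -> isnode t ->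
  minc t S (cT t S).
Proof. by move=> U S0 Ss N; case: (minc_ex U S0 Ss N) => C HC; rewrite (cT_eq HC). Qed.

End Trees.

Section Ins.
Variable n : nat.
Implicit Types (t : btree n) (S C D : {set 'I_n}).

Lemma emb_inj : injective (@emb n).
Proof. by move=> a b /(congr1 val) /= /val_inj. Qed.

Lemma emb_max (y : 'I_n) : (emb y == ord_max) = false.
Proof. by apply/negbTE; rewrite neq_ltn /= ltn_ord. Qed.

Lemma max_emb (y : 'I_n) : (ord_max == emb y) = false.
Proof. by rewrite eq_sym emb_max. Qed.

Lemma split_ord (z : 'I_n.+1) : z = ord_max \/ exists y, z = emb y.
Proof.
case: (ltnP z n) => H.
  by right; exists (Ordinal H); apply/val_inj.
by left; apply/val_inj => /=; apply/eqP; rewrite eqn_leq H -ltnS ltn_ord.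
Qed.

Lemma mem_emb (y : 'I_n) C : (emb y \in @emb n @: C) = (y \in C).
Proof. exact: mem_imset emb_inj. Qed.

Lemma max_notin_emb C : (ord_max \in @emb n @: C) = false.
Proof. by apply/negbTE/imsetP => -[y _ /eqP]; rewrite max_emb. Qed.

Definition phi1 (x : 'I_n) C : {set 'I_n.+1} :=
  @emb n @: C :|: (if x \in C then [set ord_max] else set0).

Lemma phi1_emb (x y : 'I_n) C : (emb y \in phi1 x C) = (y \in C).
Proof. by rewrite /phi1 in_setU mem_emb; case: (x \in C); rewrite ?inE ?emb_max ?orbF. Qed.

Lemma phi1_max (x : 'I_n) C : (ord_max \in phi1 x C) = (x \in C).
Proof. by rewrite /phi1 in_setU max_notin_emb; case: (x \in C); rewrite ?inE ?eqxx. Qed.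

Lemma phi1_inj (x : 'I_n) : injective (phi1 x).
Proof.
move=> C D E; apply/setP => y; by rewrite -!(phi1_emb x) E.
Qed.

Lemma phi1_subE (x : 'I_n) C D : (phi1 x C \subset phi1 x D) = (C \subset D).
Proof.
apply/subsetP/subsetP => H z.
  by rewrite -!(phi1_emb x); apply: H.
by case: (split_ord z) => [->|[y ->]]; rewrite ?phi1_max ?phi1_emb; apply: H.
Qed.

Lemma emb_sub_phi1 (x : 'I_n) S C : (@emb n @: S \subset phi1 x C) = (S \subset C).
Proof.
apply/subsetP/subsetP => H z.
  by move=> Hz; rewrite -(phi1_emb x); apply: H; rewrite mem_emb.
by case/imsetP => y yS ->; rewrite phi1_emb; apply: H.
Qed.

Fixpoint ins (x : 'I_n) t : btree n.+1 :=
  match t with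
  | BLeaf y => if y == x then BNode (BLeaf (emb y)) (BLeaf ord_max) else BLeaf (emb y)
  | BNode l r => BNode (ins x l) (ins x r)
  end.

Lemma ins_emb (x : 'I_n) t (y : 'I_n) : (emb y \in leaves (ins x t)) = (y \in leaves t).
Proof.
elim: t => [z|l IHl r IHr] /=; last by rewrite !mem_cat IHl IHr.
case: eqP => _ /=; rewrite !inE ?emb_max ?orbF; exact: (inj_eq emb_inj).
Qed.

Lemma ins_max (x : 'I_n) t : (ord_max \in leaves (ins x t)) = (x \in leaves t).
Proof.
elim: t => [z|l IHl r IHr] /=; last by rewrite !mem_cat IHl IHr.
case: eqP => [->|/eqP H] /=; first by rewrite !inE max_emb !eqxx.
by rewrite !inE max_emb eq_sym (negbTE H).
Qed.

Lemma ls_ins (x : 'I_n) t : ls (ins x t) = phi1 x (ls t).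
Proof.
apply/setP => z; case: (split_ord z) => [->|[y ->]].
  by rewrite phi1_max !inE ins_max.
by rewrite phi1_emb !inE ins_emb.
Qed.

Lemma uniq_ins (x : 'I_n) t : uniq (leaves t) -> uniq (leaves (ins x t)).
Proof.
elim: t => [z|l IHl r IHr] /=.
  by case: eqP => _ //=; rewrite inE emb_max.
move=> U; have Ul : uniq (leaves l) by move: U; rewrite cat_uniq => /and3P[].
have Ur : uniq (leaves r) by move: U; rewrite cat_uniq => /and3P[].
apply: uniq_catI; [exact: IHl | exact: IHr|] => z.
case: (split_ord z) => [->|[y ->]]; rewrite ?ins_max ?ins_emb => H1 H2;
  exact: uniq_cat_disj U H1 H2.
Qed.

Lemma isnode_ins (x : 'I_n) t : isnode t -> isnode (ins x t).
Proof. by case: t. Qed.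

Lemma clades_insP (x : 'I_n) t (E : {set 'I_n.+1}) :
  E \in clades (ins x t) <->
  (exists2 C, C \in clades t & E = phi1 x C) \/ (x \in leaves t /\ E = [set emb x; ord_max]).
Proof.
elim: t => [y|l IHl r IHr].
  rewrite /=; case: eqP => [->|/eqP Nyx] /=.
    rewrite !inE; split.
      rewrite ?orbF => /eqP->; right; split => //; apply/setP => z; by rewrite !inE.
    case=> [[C]|[_ ->]]; first by rewrite inE.
    by rewrite ?orbF; apply/eqP/setP => z; rewrite !inE.
  rewrite inE; split => //; case=> [[C]|[]]; first by rewrite inE.
  by rewrite inE eq_sym (negbTE Nyx).
rewrite [ins _ _]/= clades_node -[BNode (ins x l) (ins x r)]/(ins x (BNode l r)) ls_ins.
rewrite !inE -/(clades (ins x l)) -/(clades (ins x r)); split.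
  case/orP => [/orP[/eqP->|/IHl]|/IHr].
  - by left; exists (ls (BNode l r)); first by rewrite clades_node !inE eqxx.
  - case=> [[C C1 ->]|[H ->]].
      by left; exists C => //; rewrite clades_node !inE C1 orbT.
    by right; rewrite /= mem_cat H.
  - case=> [[C C1 ->]|[H ->]].
      by left; exists C => //; rewrite clades_node !inE C1 !orbT.
    by right; rewrite /= mem_cat H orbT.
case=> [[C]|[]].
  rewrite clades_node !inE => /orP[/orP[/eqP->->|C1 EC]|C1 EC]; first by apply/orP; left; apply/orP; left; apply/eqP.
    by apply/orP; left; apply/orP; right; apply/IHl; left; exists C.
  by apply/orP; right; apply/IHr; left; exists C.
rewrite /= mem_cat => /orP[H|H] EE.
  by apply/orP; left; apply/orP; right; apply/IHl; right.
by apply/orP; right; apply/IHr; right.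
Qed.


Lemma olP m (t : btree m) : on_leafset t <-> uniq (leaves t) /\ forall z, z \in leaves t.
Proof.
split.
  by move=> P; split; [rewrite (perm_uniq P) enum_uniq | move=> z; rewrite (perm_mem P) mem_enum].
by case=> U A; apply: uniq_perm => // [|z]; [exact: enum_uniq | rewrite mem_enum A].
Qed.

Lemma ls_all m (t : btree m) : on_leafset t -> ls t = setT.
Proof. by case/(iffLR (olP _)) => _ A; apply/setP => z; rewrite !inE A. Qed.

Lemma isnode_ol m (t : btree m) : on_leafset t -> 1 < m -> isnode t.
Proof. by case: t => // y /perm_size; rewrite size_enum_ord /= => <-. Qed.

Lemma ol_ins (x : 'I_n) t : on_leafset t -> on_leafset (ins x t).
Proof.
case/(iffLR (olP _)) => U A; apply: (iffRL (olP _)); split; first exact: uniq_ins.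
by move=> z; case: (split_ord z) => [->|[y ->]]; rewrite ?ins_max ?ins_emb.
Qed.

Lemma subset_pair (T : finType) (a b : T) (A : {set T}) :
  ([set a; b] \subset A) = (a \in A) && (b \in A).
Proof. by rewrite subUset !sub1set. Qed.

Lemma cT_ins_old (x : 'I_n) t S : uniq (leaves t) -> isnode t -> S \subset ls t ->
  (forall z, ~~ (S \subset [set z])) ->
  cT (ins x t) (@emb n @: S) = phi1 x (cT t S).
Proof.
move=> U N Ss Ns.
have S0 : S != set0 by apply/set0Pn; move: (Ns x); case/subsetPn => z zS _; exists z.
have [C1 C2 C3] := cT_spec U S0 Ss N.
apply: cT_eq; split.
- by apply/clades_insP; left; exists (cT t S).
- by rewrite emb_sub_phi1.
- move=> D /clades_insP [[D0 D0c ->]|[_ ->]].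
    by rewrite emb_sub_phi1 phi1_subE; exact: C3.
  move=> H; case/negP: (Ns x); apply/subsetP => z zS.
  have : emb z \in [set emb x; ord_max] by apply: (subsetP H); rewrite mem_emb.
  by rewrite !inE emb_max orbF (inj_eq emb_inj).
Qed.

Lemma cT_ins_new (x w : 'I_n) t : uniq (leaves t) -> isnode t -> x \in leaves t ->
  w \in leaves t -> w != x ->
  cT (ins x t) [set ord_max; emb w] = phi1 x (cT t [set x; w]).
Proof.
move=> U N xl wl Nwx.
have S0 : [set x; w] != set0 by apply/set0Pn; exists x; rewrite !inE eqxx.
have Ss : [set x; w] \subset ls t by rewrite subset_pair !inE xl wl.
have [C1 C2 C3] := cT_spec U S0 Ss N.
move: C2; rewrite subset_pair => /andP[xC wC].
apply: cT_eq; split.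
- by apply/clades_insP; left; exists (cT t [set x; w]).
- by rewrite subset_pair phi1_max phi1_emb xC wC.
- move=> D /clades_insP [[D0 D0c ->]|[_ ->]].
    rewrite subset_pair phi1_max phi1_emb phi1_subE => H; apply: C3 => //.
    by rewrite subset_pair.
  rewrite subset_pair !inE eqxx max_emb (inj_eq emb_inj) emb_max orbF /=.
  by rewrite (negbTE Nwx).
Qed.

Lemma cT_ins_self (x : 'I_n) t : x \in leaves t ->
  cT (ins x t) [set ord_max; emb x] = [set emb x; ord_max].
Proof.
move=> xl; apply: cT_eq; split.
- by apply/clades_insP; right.
- by rewrite subset_pair !inE !eqxx orbT.
- move=> D /clades_insP [[D0 D0c ->]|[_ ->]] //.
  by rewrite !subset_pair phi1_max phi1_emb.
Qed.

Lemma phi1_fresh (x : 'I_n) t C : uniq (leaves t) -> C \in clades t ->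
  phi1 x C != [set emb x; ord_max].
Proof.
move=> U Cc; apply/eqP => E; case/negP: (clade_nonsingle x U Cc).
apply/subsetP => z zC.
have : emb z \in [set emb x; ord_max] by rewrite -E phi1_emb.
by rewrite !inE emb_max orbF (inj_eq emb_inj).
Qed.

End Ins.

Section Relab.
Variable n : nat.
Variable s : {perm 'I_n}.
Implicit Types (t : btree n) (S C D : {set 'I_n}).

Fixpoint relab t : btree n :=
  match t with
  | BLeaf y => BLeaf (s y)
  | BNode l r => BNode (relab l) (relab r)
  end.

Lemma leaves_relab t : leaves (relab t) = map s (leaves t).
Proof. by elim: t => [y|l IHl r IHr] //=; rewrite map_cat IHl IHr. Qed.

Lemma ls_relab t : ls (relab t) = [set s z | z in ls t].
Proof.
apply/setP => z; rewrite inE leaves_relab.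
apply/mapP/imsetP => [[y yl ->]|[y yA ->]]; exists y => //.
  by rewrite inE.
by rewrite inE in yA.
Qed.

Lemma clades_relab t : clades (relab t) = [set [set s z | z in (C : {set 'I_n})] | C in clades t].
Proof.
elim: t => [y|l IHl r IHr] /=; first by rewrite imset0.
rewrite -/(ls (BNode (relab l) (relab r))) -[BNode (relab l) (relab r)]/(relab (BNode l r)).
by rewrite ls_relab !imsetU imset_set1 IHl IHr.
Qed.

Lemma imset_perm_sub S D : ([set s z | z in S] \subset [set s z | z in D]) = (S \subset D).
Proof.
have Ms (A : {set 'I_n}) y : (s y \in [set s z | z in A]) = (y \in A).
  exact: (mem_imset _ _ perm_inj).
apply/subsetP/subsetP => H z.
  by move=> zS; rewrite -Ms; apply: H; rewrite Ms.
by case/imsetP => y yS ->; rewrite Ms H.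
Qed.

Lemma cT_relab t S : uniq (leaves t) -> isnode t -> S != set0 -> S \subset ls t ->
  cT (relab t) [set s z | z in S] = [set s z | z in cT t S].
Proof.
move=> U N S0 Ss; have [C1 C2 C3] := cT_spec U S0 Ss N.
apply: cT_eq; split.
- by rewrite clades_relab imset_f.
- by rewrite imset_perm_sub.
- move=> D; rewrite clades_relab => /imsetP[D0 D0c ->].
  by rewrite !imset_perm_sub; apply: C3.
Qed.

Lemma ol_relab t : on_leafset t -> on_leafset (relab t).
Proof.
case/(iffLR (olP _)) => U A; apply: (iffRL (olP _)); rewrite leaves_relab; split.
  by rewrite (map_inj_uniq perm_inj).
by move=> z; rewrite -(permKV s z) mem_map ?A //; exact: perm_inj.
Qed.

End Relab.

Definition wfH n (H : {set {set 'I_n}}) := forall e, e \in H -> forall z, ~~ (e \subset [set z]).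

Definition good n (H : {set {set 'I_n}}) (t1 t2 : btree n) :=
  [/\ on_leafset t1, on_leafset t2 & TW (clade_ends t1 t2) (clade_vertices t1 t2) H].

Lemma inl_cv m (t1 t2 : btree m) (C : {set 'I_m}) : (inl C \in clade_vertices t1 t2) = (C \in clades t1).
Proof.
rewrite /clade_vertices in_setU (mem_imset _ _ (@inl_inj _ _)).
have F : (inl C \in [set inr D | D in clades t2]) = false by apply/imsetP => -[].
by rewrite F orbF.
Qed.

Lemma inr_cv m (t1 t2 : btree m) (C : {set 'I_m}) : (inr C \in clade_vertices t1 t2) = (C \in clades t2).
Proof.
rewrite /clade_vertices in_setU (mem_imset _ _ (@inr_inj _ _)).
have F : (inr C \in [set inl D | D in clades t1]) = false by apply/imsetP => -[].
by rewrite F.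
Qed.

Section Move.
Variable n : nat.
Implicit Types (H : {set {set 'I_n}}) (t : btree n).

Definition Phi (x y : 'I_n) (v : {set 'I_n} + {set 'I_n}) : {set 'I_n.+1} + {set 'I_n.+1} :=
  match v with inl C => inl (phi1 x C) | inr C => inr (phi1 y C) end.

Definition Psi (e : {set 'I_n}) : {set 'I_n.+1} := [set emb z | z in e].

Lemma Phi_inj x y : injective (Phi x y).
Proof. by move=> [C|C] [D|D] //= [] /phi1_inj ->. Qed.

Lemma Psi_inj : injective Psi.
Proof. move=> A B E; apply/setP => z; by rewrite -(mem_emb z) -(mem_emb z B) -/(Psi A) E. Qed.

Lemma ends_trans H t1 t2 x y : 1 < n -> on_leafset t1 -> on_leafset t2 -> wfH H ->
  forall g, g \in H -> clade_ends (ins x t1) (ins y t2) (Psi g) =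
   (Phi x y (clade_ends t1 t2 g).1, Phi x y (clade_ends t1 t2 g).2).
Proof.
move=> n1 o1 o2 W g gH; rewrite /clade_ends /=.
have U1 := proj1 (iffLR (olP _) o1); have U2 := proj1 (iffLR (olP _) o2).
by rewrite /Psi !cT_ins_old ?(isnode_ol _ n1) ?(ls_all o1) ?(ls_all o2) ?subsetT //; apply: W.
Qed.

Lemma max_notin_lift H w : [set ord_max; emb w] \notin lift_edges H.
Proof.
apply/imsetP => -[e _ Eq].
have : ord_max \in [set ord_max; @emb n w] by rewrite !inE eqxx.
by rewrite Eq max_notin_emb.
Qed.

Lemma vv_neq (x y : 'I_n) : x != y -> [set ord_max; emb x] != [set ord_max; emb y].
Proof.
move=> Nxy; apply/eqP => Eq.
have : emb x \in [set ord_max; @emb n y] by rewrite -Eq !inE eqxx orbT.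
by rewrite !inE emb_max (inj_eq (@emb_inj _)) (negbTE Nxy).
Qed.

Lemma L_trans H t1 t2 x y : 1 < n -> wfH H -> good H t1 t2 ->
  TW (clade_ends (ins x t1) (ins y t2)) (Phi x y @: clade_vertices t1 t2) (lift_edges H).
Proof.
move=> n1 W [o1 o2 T].
have := T3 (ends' := clade_ends (ins x t1) (ins y t2)) (@Phi_inj x y) Psi_inj _ T; apply.
exact: ends_trans.
Qed.

Lemma L_pend H t1 t2 x y (E1 : {set {set 'I_n.+1}}) : 1 < n -> good H t1 t2 -> x != y ->
  TW (clade_ends (ins x t1) (ins y t2)) (Phi x y @: clade_vertices t1 t2) E1 ->
  [set ord_max; emb x] \notin E1 -> [set ord_max; emb y] \notin E1 ->
  TW (clade_ends (ins x t1) (ins y t2)) (clade_vertices (ins x t1) (ins y t2))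
     ([set ord_max; emb y] |: ([set ord_max; emb x] |: E1)).
Proof.
move=> n1 [o1 o2 _] Nxy T vxE vyE.
have [U1 A1] := iffLR (olP _) o1; have [U2 A2] := iffLR (olP _) o2.
have N1 := isnode_ol o1 n1; have N2 := isnode_ol o2 n1.
have S2 : forall a b : 'I_n, minc t2 [set a; b] (cT t2 [set a; b]).
  move=> a b; apply: cT_spec => //; last by rewrite ls_all ?subsetT.
  by apply/set0Pn; exists a; rewrite !inE eqxx.
have S1 : forall a b : 'I_n, minc t1 [set a; b] (cT t1 [set a; b]).
  move=> a b; apply: cT_spec => //; last by rewrite ls_all ?subsetT.
  by apply/set0Pn; exists a; rewrite !inE eqxx.
set Vs := Phi x y @: clade_vertices t1 t2.
set z1 := inl [set emb x; ord_max] : {set 'I_n.+1} + {set 'I_n.+1}.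
set z2 := inr [set emb y; ord_max] : {set 'I_n.+1} + {set 'I_n.+1}.
have z1V : z1 \notin Vs.
  apply/imsetP => -[[C|C] CV //= [Eq]].
  by rewrite inl_cv in CV; move: (phi1_fresh x U1 CV); rewrite -Eq eqxx.
have Nyx : y != x by rewrite eq_sym.
have T' : TW (clade_ends (ins x t1) (ins y t2)) (z1 |: Vs) ([set ord_max; emb x] |: E1).
  apply: (T1 T z1V vxE (y := inr (phi1 y (cT t2 [set y; x])))).
    apply/imsetP; exists (inr (cT t2 [set y; x])) => //.
    by rewrite inr_cv; case: (S2 y x).
  rewrite /joins /clade_ends cT_ins_self ?A1 // cT_ins_new ?A2 //.
  by rewrite eqxx.
have Veq : clade_vertices (ins x t1) (ins y t2) = z2 |: (z1 |: Vs).
  apply/esym/setP => -[C|C]; rewrite !in_setU1 /= ?inl_cv ?inr_cv.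
  + apply/idP/idP.
      case/orP => [/eqP[->]|/imsetP[[D|D] DV //= [->]]]; apply/clades_insP; first by right.
      by left; exists D => //; move: DV; rewrite inl_cv.
    case/clades_insP => [[D DC ->]|[_ ->]]; last by rewrite eqxx.
    by apply/orP; right; apply/imsetP; exists (inl D); rewrite ?inl_cv.
  + apply/idP/idP.
      case/orP => [/eqP[->]|/imsetP[[D|D] DV //= [->]]]; apply/clades_insP; first by right.
      by left; exists D => //; move: DV; rewrite inr_cv.
    case/clades_insP => [[D DC ->]|[_ ->]]; last by rewrite eqxx.
    by apply/orP; right; apply/imsetP; exists (inr D); rewrite ?inr_cv.
rewrite Veq.
apply: (T1 T' _ _ (y := inl (phi1 x (cT t1 [set x; y])))) => //.
- rewrite in_setU1 negb_or; apply/andP; split => //.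
  apply/imsetP => -[[C|C] CV //= [Eq]].
  by rewrite inr_cv in CV; move: (phi1_fresh y U2 CV); rewrite -Eq eqxx.
- by rewrite in_setU1 negb_or vv_neq.
- apply: setU1r; apply/imsetP; exists (inl (cT t1 [set x; y])) => //.
  by rewrite inl_cv; case: (S1 x y).
- rewrite /joins /clade_ends cT_ins_self ?A2 // cT_ins_new ?A1 //.
  by rewrite eqxx orbT.
Qed.


Lemma setE3 (T : finType) (A : {set T}) a b : A :|: [set a; b] = b |: (a |: A).
Proof.
by apply/setP => g; rewrite !inE; case: (g \in A); case: (g == a); case: (g == b).
Qed.

Lemma setE4 (T : finType) (A : {set T}) a b c : A :|: [set a; b; c] = b |: (a |: (c |: A)).
Proof.
apply/setP => g; rewrite !inE.
by case: (g \in A); case: (g == a); case: (g == b); case: (g == c).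
Qed.

Lemma Ld H e : lift_edges (H :\ e) = lift_edges H :\ Psi e.
Proof.
apply/setP => g; rewrite in_setD1; apply/imsetP/andP => [[h /setD1P[hx hH] ->]|[gx /imsetP[h hH Eg]]].
  split; last by apply/imsetP; exists h.
  apply/negP => /eqP E; move/negP: hx; apply; apply/eqP; exact: Psi_inj E.
exists h => //; rewrite in_setD1 hH andbT; apply/negP => /eqP Eh.
by move/negP: gx; apply; rewrite Eg Eh.
Qed.

Lemma move1 H t1 t2 x y : 1 < n -> wfH H -> good H t1 t2 -> x != y ->
  good (lift_edges H :|: [set [set ord_max; emb x]; [set ord_max; emb y]]) (ins x t1) (ins y t2).
Proof.
move=> n1 W G Nxy; have [o1 o2 _] := G.
split; [exact: ol_ins | exact: ol_ins |].
rewrite setE3; apply: (L_pend (H := H)) => //; [exact: (L_trans x y n1 W G) | exact: max_notin_lift | exact: max_notin_lift].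
Qed.

Lemma move2 H t1 t2 x y w e a b : 1 < n -> wfH H -> good H t1 t2 -> e \in H ->
  x != y -> w != x -> w != y ->
  joins (clade_ends t1 t2) e a b ->
  connect (adj (H :\ e) (clade_ends t1 t2)) (inl (cT t1 [set x; w])) a ->
  connect (adj (H :\ e) (clade_ends t1 t2)) (inr (cT t2 [set y; w])) b ->
  good (lift_edges (H :\ e) :|: [set [set ord_max; emb x]; [set ord_max; emb y];
                                      [set ord_max; emb w]]) (ins x t1) (ins y t2).
Proof.
move=> n1 W G eH Nxy Nwx Nwy J Ca Cb; have [o1 o2 T] := G.
have [U1 A1] := iffLR (olP _) o1; have [U2 A2] := iffLR (olP _) o2.
have N1 := isnode_ol o1 n1; have N2 := isnode_ol o2 n1.
have S2 : forall a b : 'I_n, minc t2 [set a; b] (cT t2 [set a; b]).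
  move=> a' b'; apply: cT_spec => //; last by rewrite ls_all ?subsetT.
  by apply/set0Pn; exists a'; rewrite !inE eqxx.
have S1 : forall a b : 'I_n, minc t1 [set a; b] (cT t1 [set a; b]).
  move=> a' b'; apply: cT_spec => //; last by rewrite ls_all ?subsetT.
  by apply/set0Pn; exists a'; rewrite !inE eqxx.
split; [exact: ol_ins | exact: ol_ins |].
rewrite setE4 Ld; apply: (L_pend (H := H)) => //.
- have T0' := L_trans x y n1 W G.
  have Hends := ends_trans x y n1 o1 o2 W.
  apply: (T2 T0' (g := Psi e) (a := Phi x y a) (b := Phi x y b)
     (c := inl (phi1 x (cT t1 [set x; w]))) (d := inr (phi1 y (cT t2 [set y; w])))).
  + by apply/imsetP; exists e.
  + by apply: joins_map J; apply: Hends.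
  + exact: max_notin_lift.
  + by rewrite /joins /clade_ends !cT_ins_new ?A1 ?A2 // eqxx.
  + apply/imsetP; exists (inl (cT t1 [set x; w])) => //.
    by rewrite inl_cv; case: (S1 x w).
  + apply/imsetP; exists (inr (cT t2 [set y; w])) => //.
    by rewrite inr_cv; case: (S2 y w).
  + rewrite -Ld; apply: (conn_map (phi := Phi x y) _ Ca).
    by move=> g /setD1P[_ gH]; apply: Hends.
  + rewrite -Ld; apply: (conn_map (phi := Phi x y) _ Cb).
    by move=> g /setD1P[_ gH]; apply: Hends.
- rewrite in_setU1 negb_or eq_sym vv_neq //= in_setD1 negb_and max_notin_lift.
  by rewrite orbT.
- rewrite in_setU1 negb_or eq_sym vv_neq //= in_setD1 negb_and max_notin_lift.
  by rewrite orbT.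
Qed.

End Move.

Lemma wfH_lift n (H : {set {set 'I_n}}) : 0 < n -> wfH H -> wfH (lift_edges H).
Proof.
move=> n0 W e' /imsetP[e eH ->] z; apply/negP => /subsetP Hs.
case: (split_ord z) => [Ez|[y Ez]]; subst z.
  case/subsetPn: (W e eH (Ordinal n0)) => y ye _.
  by have := Hs (emb y) (imset_f _ ye); rewrite inE emb_max.
case/negP: (W e eH y); apply/subsetP => u ue.
by have := Hs (emb u) (imset_f _ ue); rewrite !inE (inj_eq (@emb_inj _)).
Qed.

Lemma wf_new n (w : 'I_n) z : ~~ ([set ord_max; emb w] \subset [set z]).
Proof.
apply/negP => /subsetP Hs.
have h1 : ord_max \in [set z] by apply: Hs; rewrite !inE eqxx.
have h2 : emb w \in [set z] by apply: Hs; rewrite !inE eqxx orbT.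
by rewrite !inE in h1 h2; move/eqP: h1 h2 => <-; rewrite emb_max.
Qed.

Lemma wfH_sub n (H H' : {set {set 'I_n}}) : H' \subset H -> wfH H -> wfH H'.
Proof. by move=> sub W e eH; apply: W; apply: (subsetP sub). Qed.

Definition t0 : btree 2 := BNode (BLeaf ord0) (BLeaf ord_max).

Lemma base : good [set [set (ord0 : 'I_2); ord_max]] t0 t0.
Proof.
have o : on_leafset t0.
  apply: (iffRL (olP _)); split; first by [].
  by move=> z; rewrite !inE; case: z => [[|[|m]] Hz] //.
split => //.
set R := ls t0.
have Cl : clades t0 = [set R] by rewrite /= !setU0.
have E : cT t0 [set ord0; ord_max] = R.
  apply: cT_eq; split; first by rewrite Cl inE.
    by rewrite subset_pair !inE.
  by move=> D; rewrite Cl inE => /eqP ->.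
have T0' := T0 (clade_ends t0 t0) (inl R).
have := T1 T0' (z := inr R) (f := [set ord0; ord_max]) (y := inl R).
rewrite !inE /= eqxx => /(_ isT isT isT).
have -> : clade_vertices t0 t0 = inr R |: [set inl R].
  by rewrite /clade_vertices Cl !imset_set1 setUC.
rewrite setU0; apply.
by rewrite /joins /clade_ends E eqxx orbT.
Qed.

Section Relabel.
Variable n : nat.
Variable s : {perm 'I_n}.

Definition PhiR (v : {set 'I_n} + {set 'I_n}) : {set 'I_n} + {set 'I_n} :=
  match v with inl C => inl [set s z | z in C] | inr C => inr [set s z | z in C] end.

Lemma PhiR_inj : injective PhiR.
Proof.
by move=> [C|C] [D|D] //= [] /(imset_inj (@perm_inj _ s)) ->.
Qed.

Lemma PsiR_inj : injective (fun e : {set 'I_n} => [set s z | z in e]).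
Proof. exact: (imset_inj (@perm_inj _ s)). Qed.

Lemma relab_good (H : {set {set 'I_n}}) t1 t2 : 1 < n -> wfH H -> good H t1 t2 ->
  good [set [set s x | x in (e : {set 'I_n})] | e in H] (relab s t1) (relab s t2).
Proof.
move=> n1 W [o1 o2 T].
have [U1 A1] := iffLR (olP _) o1; have [U2 A2] := iffLR (olP _) o2.
have N1 := isnode_ol o1 n1; have N2 := isnode_ol o2 n1.
split; [exact: ol_relab | exact: ol_relab |].
have Veq : clade_vertices (relab s t1) (relab s t2) = PhiR @: clade_vertices t1 t2.
  apply/setP => -[C|C]; rewrite ?inl_cv ?inr_cv clades_relab.
    apply/imsetP/imsetP => [[D DC ->]|[[D|D] DV //= [->]]].
      by exists (inl D); rewrite ?inl_cv.
    by exists D; move: DV; rewrite ?inl_cv.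
  apply/imsetP/imsetP => [[D DC ->]|[[D|D] DV //= [->]]].
    by exists (inr D); rewrite ?inr_cv.
  by exists D; move: DV; rewrite ?inr_cv.
rewrite Veq.
apply: (T3 PhiR_inj PsiR_inj _ T).
move=> g gH.
have g0 : g != set0.
  by apply/set0Pn; case/subsetPn: (W g gH (Ordinal (ltnW n1))) => z zg _; exists z.
rewrite /clade_ends /= !cT_relab ?ls_all ?subsetT //.
Qed.

Lemma wfH_relab (H : {set {set 'I_n}}) : wfH H -> wfH [set [set s x | x in (e : {set 'I_n})] | e in H].
Proof.
move=> W e' /imsetP[e eH ->] z.
rewrite -(permKV s z) -imset_set1 imset_perm_sub; exact: W.
Qed.

End Relabel.

Lemma setP3 (T : finType) (a b c : T) : [set a; b; c] = [set c; b; a].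
Proof. by apply/setP => g; rewrite !inE; case: (g == a); case: (g == b); case: (g == c). Qed.

Lemma setP3' (T : finType) (a b c : T) : [set a; b; c] = [set a; c; b].
Proof. by apply/setP => g; rewrite !inE; case: (g == a); case: (g == b); case: (g == c). Qed.

Lemma pairC (T : finType) (a b : T) : [set a; b] = [set b; a].
Proof. by rewrite setUC. Qed.

Lemma main n (H : {set {set 'I_n}}) : henneberg H ->
  [/\ 1 < n, wfH H & exists t1 t2, good H t1 t2].
Proof.
elim => {n H}.
- split => //; last by exists t0, t0; exact: base.
  move=> e; rewrite inE => /eqP -> z; apply/negP => /subsetP Hs.
  have h1 : ord0 \in [set z] by apply: Hs; rewrite !inE eqxx.
  have h2 : ord_max \in [set z] by apply: Hs; rewrite !inE eqxx orbT.
  by rewrite !inE in h1 h2; move/eqP: h1 h2 => <-.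
- move=> n H s _ [n1 W [t1 [t2 G]]]; split => //; first exact: wfH_relab.
  by exists (relab s t1), (relab s t2); exact: relab_good.
- move=> n H i j _ [n1 W [t1 [t2 G]]] Nij; split; first exact: ltnW.
    move=> e; rewrite in_setU => /orP[He|].
      by apply: (wfH_lift (ltnW n1) W).
    by rewrite !inE => /orP[] /eqP ->; apply: wf_new.
  by exists (ins i t1), (ins j t2); apply: move1.
- move=> n H i j k _ [n1 W [t1 [t2 G]]] ijH Nki Nkj; split; first exact: ltnW.
    move=> e; rewrite in_setU => /orP[He|].
      apply: (wfH_lift (ltnW n1) _ He); apply: wfH_sub W; exact: subD1set.
    by rewrite !inE => /orP[/orP[]|] /eqP ->; apply: wf_new.
  have Nji : j != i.
    by move: (W _ ijH i); apply: contra => /eqP ->; rewrite subset_pair !inE eqxx.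
  have Nij : i != j by rewrite eq_sym.
  have [o1 o2 T] := G.
  have [U1 A1] := iffLR (olP _) o1; have [U2 A2] := iffLR (olP _) o2.
  have N1 := isnode_ol o1 n1; have N2 := isnode_ol o2 n1.
  set e := [set i; j].
  set a := inl (cT t1 e) : {set 'I_n} + {set 'I_n}.
  set b := inr (cT t2 e) : {set 'I_n} + {set 'I_n}.
  have J : joins (clade_ends t1 t2) e a b by rewrite /joins /clade_ends eqxx.
  have S1 : forall a b : 'I_n, minc t1 [set a; b] (cT t1 [set a; b]).
    move=> a' b'; apply: cT_spec => //; last by rewrite ls_all ?subsetT.
    by apply/set0Pn; exists a'; rewrite !inE eqxx.
  have S2 : forall a b : 'I_n, minc t2 [set a; b] (cT t2 [set a; b]).
    move=> a' b'; apply: cT_spec => //; last by rewrite ls_all ?subsetT.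
    by apply/set0Pn; exists a'; rewrite !inE eqxx.
  have PV : inl (cT t1 [set i; k]) \in clade_vertices t1 t2 by rewrite inl_cv; case: (S1 i k).
  have QV : inr (cT t2 [set j; k]) \in clade_vertices t1 t2 by rewrite inr_cv; case: (S2 j k).
  case/orP: (dich T ijH J PV) => [Pa|Pb].
    exists (ins k t1), (ins j t2); rewrite setP3.
    apply: (move2 n1 W G ijH _ _ _ J) => //.
    + by rewrite eq_sym.
    + by rewrite (pairC k i).
    + by rewrite (pairC j i); exact: connect0.
  case/orP: (dich T ijH J QV) => [Qa|Qb].
    exists (ins i t1), (ins j t2).
    apply: (move2 n1 W G ijH _ _ _ (a := b) (b := a)) => //.
    by rewrite joins_sym.
  exists (ins i t1), (ins k t2); rewrite setP3'.
  apply: (move2 n1 W G ijH _ _ _ J) => //.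
  + by rewrite eq_sym.
  + by rewrite eq_sym.
  + by rewrite (pairC k j).
Qed.

Unset Implicit Arguments.

Theorem lemma4p6 (n : nat) (H : {set {set 'I_n}}) :
  2 <= n -> henneberg H ->
  exists t1 t2 : btree n,
    [/\ on_leafset t1, on_leafset t2 & restricted_clade_graph_is_tree H t1 t2].
Proof.
move=> _ /main [_ _ [t1 [t2 [o1 o2 [T _]]]]].
by exists t1, t2.
Qed.
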